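(* Let $u:\Sigma\to M$ be a smooth $(j,J)$-holomorphic map and $z_0\in\Sigma$ with $j^ku(z_0)=0$ for some $k\ge 1$. Let $z=s+it$ be a complex coordinate on $\Sigma$ centered at $z_0$ and $(w_1,\dots,w_n)$, $w_m=x_m+\sqrt{-1}y_m$, coordinates on $M$ centered at $p_0=u(z_0)$ with $J\,\partial/\partial x_m|_{p_0}=\partial/\partial y_m|_{p_0}$ and $J\,\partial/\partial y_m|_{p_0}=-\partial/\partial x_m|_{p_0}$ for all $m$. Then $$u(z)=\vec a_{k+1}z^{k+1}+o(|z|^{k+1})$$ for some $\vec a_{k+1}\in T_{p_0}M\cong\mathbb C^n$. Equivalently, $d^{k+1}u(z_0)=\vec a\cdot dz^{\otimes(k+1)}$ with $\vec a\in T_{u(z_0)}M$. In particular the principal jet of $u$ at $z_0$ is holomorphic (lies in $H^{(k+1,0)}_{(z_0,u(z_0))}$), and at every point of $\Sigma$ the ramification degree of $u$ equals its holomorphic ramification degree.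
   Context: $(M,J)$ is an almost complex manifold of real dimension $2n$, $(\Sigma,j)$ a Riemann surface. $u$ is $(j,J)$-holomorphic if $J\circ du=du\circ j$. For a smooth map $u$ and $z\in\Sigma$, $j^ku(z)=0$ means that all derivatives of $u$ of orders $1,\dots,k$ vanish at $z$ (in local coordinates; this condition is coordinate independent). When $j^ku(z)=0$, the $(k+1)$-st derivative $d^{k+1}u(z)$ is a well-defined symmetric $(k+1)$-linear map $T_z\Sigma\to T_{u(z)}M$. The space $\mathrm{Sym}^\ell(T_z\Sigma,T_xM)$ of symmetric $\ell$-linear maps splits, relative to $(j_z,J_x)$, into the holomorphic part $H^{(\ell,0)}_{(z,x)}$ (maps that are complex multilinear, i.e. $L(jv_1,v_2,\dots)=J_xL(v_1,v_2,\dots)$), the antiholomorphic part and mixed parts; $\pi^{hol}$ denotes projection onto $H^{(\ell,0)}$. The ramification degree of $u$ at $z$ is the $k$ with $j^ku(z)=0$, $j^{k+1}u(z)\neq0$ (degree $0$ at immersed points), and $j^{k+1}u(z)$ is then called the principal jet. The holomorphic ramification degree is defined the same way using the holomorphic jets $j^\ell_{hol}u(z)=(\pi^{hol}(d^mu(z)))_{m\le\ell}$ instead of $j^\ell u(z)$. *)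

(* Defs.v *)
From Stdlib Require Import Reals Lra Lia List Factorial.
Open Scope R_scope.

(* Points of R^d are represented as functions nat -> R; only the
   coordinates i < d are meaningful. *)

Definition setc (x : nat -> R) (i : nat) (y : R) : nat -> R :=
  fun j => if Nat.eqb j i then y else x j.

(* Open cube of radius r around 0 in R^d (an open neighbourhood of 0). *)
Definition ball (d : nat) (r : R) (x : nat -> R) : Prop :=
  forall i, (i < d)%nat -> Rabs (x i) < r.

Definition cont_at (d : nat) (f : (nat -> R) -> R) (x : nat -> R) : Prop :=
  forall eps, 0 < eps -> exists delta, 0 < delta /\
    forall y, (forall i, (i < d)%nat -> Rabs (y i - x i) < delta) ->
      Rabs (f y - f x) < eps.

Definition is_partials (d : nat) (U : (nat -> R) -> Prop)
    (f : (nat -> R) -> R) (D : list nat -> (nat -> R) -> R) : Prop :=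
  (forall x, U x -> D nil x = f x) /\
  (forall l x i, U x -> (i < d)%nat ->
     derivable_pt_lim (fun y => D l (setc x i y)) (x i) (D (i :: l) x)) /\
  (forall l x, U x -> cont_at d (D l) x).

Definition smooth_on (d : nat) (U : (nat -> R) -> Prop)
    (f : (nat -> R) -> R) : Prop :=
  exists D, is_partials d U f D.

Definition ucomp (u : R -> R -> nat -> R) (i : nat) : (nat -> R) -> R :=
  fun x => u (x 0%nat) (x 1%nat) i.

Definition zerov : nat -> R := fun _ => 0.

Fixpoint rsum (N : nat) (f : nat -> R) : R :=
  match N with O => 0 | S N' => rsum N' f + f N' end.

(* Coordinates on R^{2n}: index 2m is x_m, index 2m+1 is y_m.
   J0 is the standard complex structure: J0 d/dx_m = d/dy_m,
   J0 d/dy_m = - d/dx_m  (J0 i l = entry in row i, column l). *)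
Definition J0 (i l : nat) : R :=
  if Nat.eqb (Nat.div2 i) (Nat.div2 l) then
    (if andb (Nat.even l) (negb (Nat.even i)) then 1
     else if andb (negb (Nat.even l)) (Nat.even i) then -1 else 0)
  else 0.

Definition deltaR (i l : nat) : R := if Nat.eqb i l then 1 else 0.

Definition cmul (a b : R * R) : R * R :=
  (fst a * fst b - snd a * snd b, fst a * snd b + snd a * fst b).

Fixpoint cpow (s t : R) (p : nat) : R * R :=
  match p with
  | O => (1, 0)
  | S p' => cmul (cpow s t p') (s, t)
  end.

(* number of occurrences of direction 1 (= d/dt) in a list of directions *)
Definition count_t (l : list nat) : nat := count_occ Nat.eq_dec l 1%nat.

(* Main.v *)
Require Import Defs.
From Stdlib Require Import Reals List Factorial.
From Stdlib Require Import Lra Lia FunctionalExtensionality Arith IndefiniteDescription.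
Import ListNotations.
Open Scope R_scope.


Lemma mvt_gen (f f' : R -> R) (a b : R) :
  (forall c, Rabs (c - a) <= Rabs (b - a) -> derivable_pt_lim f c (f' c)) ->
  exists c, Rabs (c - a) <= Rabs (b - a) /\ f b - f a = f' c * (b - a).
Proof.
  intros H.
  destruct (Rtotal_order a b) as [Hab|[Hab|Hab]].
  - destruct (MVT_cor2 f f' a b Hab) as [c [Hc1 Hc2]].
    + intros c Hc. apply H. rewrite !Rabs_right by lra. lra.
    + exists c. split; [rewrite !Rabs_right by lra; lra | exact Hc1].
  - subst. exists b. split; [right; reflexivity | ring].
  - destruct (MVT_cor2 f f' b a Hab) as [c [Hc1 Hc2]].
    + intros c Hc. apply H. rewrite !Rabs_left1 by lra. lra.
    + exists c. split; [rewrite !Rabs_left1 by lra; lra | ].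
      replace (f b - f a) with (-(f a - f b)) by ring. rewrite Hc1; ring.
Qed.

Lemma dpl_local (f g : R -> R) x l d : 0 < d ->
  (forall y, Rabs (y - x) < d -> f y = g y) ->
  derivable_pt_lim f x l -> derivable_pt_lim g x l.
Proof.
  intros Hd Heq H eps Heps.
  destruct (H eps Heps) as [del Hdel].
  assert (Hm : 0 < Rmin del d) by (apply Rmin_pos; [apply cond_pos|lra]).
  exists (mkposreal _ Hm). intros h Hh0 Hh. simpl in Hh.
  rewrite <- (Heq (x+h)), <- (Heq x).
  - apply Hdel; auto. apply Rlt_le_trans with (1:=Hh); apply Rmin_l.
  - rewrite Rminus_diag, Rabs_R0; lra.
  - replace (x + h - x) with h by ring. apply Rlt_le_trans with (1:=Hh); apply Rmin_r.
Qed.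

Definition cont2 (f : R -> R -> R) (s t : R) : Prop :=
  forall eps, 0 < eps -> exists d, 0 < d /\ forall s' t',
    Rabs (s' - s) < d -> Rabs (t' - t) < d -> Rabs (f s' t' - f s t) < eps.

Definition SF (r : R) (G : list nat -> R -> R -> R) : Prop :=
  forall l s t, Rabs s < r -> Rabs t < r ->
    derivable_pt_lim (fun y => G l y t) s (G (0%nat :: l) s t) /\
    derivable_pt_lim (fun y => G l s y) t (G (1%nat :: l) s t) /\
    cont2 (G l) s t.

Definition pt (s t : R) : nat -> R :=
  fun j => if Nat.eqb j 0 then s else if Nat.eqb j 1 then t else 0.

Lemma pt00 : pt 0 0 = zerov.
Proof. apply functional_extensionality; intro j; unfold pt, zerov.
  destruct (Nat.eqb j 0); destruct (Nat.eqb j 1); reflexivity. Qed.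

Lemma setc_pt0 s t y : setc (pt s t) 0 y = pt y t.
Proof. apply functional_extensionality; intro j; unfold pt, setc.
  destruct (Nat.eqb j 0); reflexivity. Qed.

Lemma setc_pt1 s t y : setc (pt s t) 1 y = pt s y.
Proof. apply functional_extensionality; intro j; unfold pt, setc.
  destruct (Nat.eqb j 0) eqn:E0; destruct (Nat.eqb j 1) eqn:E1; try reflexivity.
  apply Nat.eqb_eq in E0; apply Nat.eqb_eq in E1; lia. Qed.

Lemma ball_pt r s t : Rabs s < r -> Rabs t < r -> ball 2 r (pt s t).
Proof. intros Hs Ht i Hi. unfold pt. destruct i as [|[|i]]; simpl; auto; lia. Qed.

Lemma SF_of_partials r f D : 0 < r -> is_partials 2 (ball 2 r) f D ->
  SF r (fun l s t => D l (pt s t)).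
Proof.
  intros Hr [H0 [H1 H2]] l s t Hs Ht.
  pose proof (ball_pt r s t Hs Ht) as Hb.
  split; [|split].
  - pose proof (H1 l (pt s t) 0%nat Hb ltac:(lia)) as D0.
    assert (E : (fun y => D l (setc (pt s t) 0 y)) = (fun y => D l (pt y t)))
      by (apply functional_extensionality; intro y; rewrite setc_pt0; reflexivity).
    rewrite E in D0. exact D0.
  - pose proof (H1 l (pt s t) 1%nat Hb ltac:(lia)) as D0.
    assert (E : (fun y => D l (setc (pt s t) 1 y)) = (fun y => D l (pt s y)))
      by (apply functional_extensionality; intro y; rewrite setc_pt1; reflexivity).
    rewrite E in D0. exact D0.
  - intros eps Heps. destruct (H2 l (pt s t) Hb eps Heps) as [d [Hd Hc]].
    exists d; split; auto. intros s' t' H's H't. apply Hc.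
    intros i Hi. destruct i as [|[|i]]; simpl; auto; lia.
Qed.

Lemma D2 r G l x y eps : SF r G -> Rabs x < r -> Rabs y < r -> 0 < eps ->
  exists d, 0 < d /\ forall h k, Rabs h < d -> Rabs k < d ->
   Rabs (G l (x+h) (y+k) - G l x y - G (0%nat::l) x y * h - G (1%nat::l) x y * k)
     <= eps * (Rabs h + Rabs k).
Proof.
  intros HG Hx Hy He.
  destruct (HG (0%nat::l) x y Hx Hy) as [_ [_ C0]].
  destruct (HG (1%nat::l) x y Hx Hy) as [_ [_ C1]].
  destruct (C0 eps He) as [d0 [Hd0 C0']].
  destruct (C1 eps He) as [d1 [Hd1 C1']].
  set (m := r - Rmax (Rabs x) (Rabs y)).
  assert (Hm : 0 < m) by (unfold m; apply Rmax_case; lra).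
  exists (Rmin m (Rmin d0 d1)). split.
  { apply Rmin_pos; auto. apply Rmin_pos; auto. }
  intros h k Hh Hk.
  assert (Hhm : Rabs h < m) by (eapply Rlt_le_trans; [exact Hh| apply Rmin_l]).
  assert (Hkm : Rabs k < m) by (eapply Rlt_le_trans; [exact Hk| apply Rmin_l]).
  assert (Hh0 : Rabs h < d0) by (eapply Rlt_le_trans; [exact Hh| eapply Rle_trans; [apply Rmin_r|apply Rmin_l]]).
  assert (Hk0 : Rabs k < d0) by (eapply Rlt_le_trans; [exact Hk| eapply Rle_trans; [apply Rmin_r|apply Rmin_l]]).
  assert (Hk1 : Rabs k < d1) by (eapply Rlt_le_trans; [exact Hk| eapply Rle_trans; [apply Rmin_r|apply Rmin_r]]).
  assert (Mx : Rabs x <= Rmax (Rabs x) (Rabs y)) by apply Rmax_l.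
  assert (My : Rabs y <= Rmax (Rabs x) (Rabs y)) by apply Rmax_r.
  assert (Hyk : Rabs (y + k) < r).
  { eapply Rle_lt_trans; [apply Rabs_triang|]. unfold m in Hkm. lra. }
  destruct (mvt_gen (fun a => G l a (y+k)) (fun a => G (0%nat::l) a (y+k)) x (x+h)) as [xi [Hxi Exi]].
  { intros c Hc. replace (x + h - x) with h in Hc by ring.
    assert (Rabs c < r).
    { replace c with (x + (c - x)) by ring.
      eapply Rle_lt_trans; [apply Rabs_triang|]. unfold m in Hhm. lra. }
    apply (HG l c (y+k)); auto. }
  destruct (mvt_gen (fun b => G l x b) (fun b => G (1%nat::l) x b) y (y+k)) as [eta [Heta Eeta]].
  { intros c Hc. replace (y + k - y) with k in Hc by ring.
    assert (Rabs c < r).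
    { replace c with (y + (c - y)) by ring.
      eapply Rle_lt_trans; [apply Rabs_triang|]. unfold m in Hkm. lra. }
    apply (HG l x c); auto. }
  simpl in Exi, Eeta.
  replace (x + h - x) with h in Exi, Hxi by ring.
  replace (y + k - y) with k in Eeta, Heta by ring.
  replace (G l (x + h) (y + k) - G l x y - G (0%nat :: l) x y * h - G (1%nat :: l) x y * k)
    with ((G (0%nat::l) xi (y+k) - G (0%nat::l) x y) * h + (G (1%nat::l) x eta - G (1%nat::l) x y) * k)
    by (rewrite <- (Rplus_0_r (G l (x+h) (y+k))); lra).
  assert (A : Rabs (G (0%nat::l) xi (y+k) - G (0%nat::l) x y) < eps).
  { apply C0'. lra. replace (y + k - y) with k by ring. auto. }
  assert (B : Rabs (G (1%nat::l) x eta - G (1%nat::l) x y) < eps).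
  { apply C1'. rewrite Rminus_diag, Rabs_R0; auto. lra. }
  eapply Rle_trans; [apply Rabs_triang|]. rewrite !Rabs_mult.
  rewrite Rmult_plus_distr_l.
  apply Rplus_le_compat; apply Rmult_le_compat_r; try apply Rabs_pos; lra.
Qed.

Lemma chain r G l s t tau0 : SF r G -> Rabs (tau0*s) < r -> Rabs (tau0*t) < r ->
  derivable_pt_lim (fun tau => G l (tau*s) (tau*t)) tau0
    (G (0%nat::l) (tau0*s) (tau0*t) * s + G (1%nat::l) (tau0*s) (tau0*t) * t).
Proof.
  intros HG Hs Ht eps Heps.
  set (K := Rabs s + Rabs t + 1).
  assert (HK : 0 < K) by (unfold K; pose proof (Rabs_pos s); pose proof (Rabs_pos t); lra).
  destruct (D2 r G l (tau0*s) (tau0*t) (eps/(2*K)) HG Hs Ht) as [d [Hd Hd']].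
  { apply Rdiv_lt_0_compat; lra. }
  assert (Hdk : 0 < d / K) by (apply Rdiv_lt_0_compat; lra).
  exists (mkposreal _ Hdk). intros h Hh0 Hh. simpl in Hh.
  assert (Hhs : Rabs (h*s) < d).
  { rewrite Rabs_mult. apply Rle_lt_trans with (Rabs h * K).
    apply Rmult_le_compat_l. apply Rabs_pos. unfold K; pose proof (Rabs_pos t); lra.
    apply (Rmult_lt_compat_r K) in Hh; auto. unfold Rdiv in Hh.
    rewrite Rmult_assoc, Rinv_l, Rmult_1_r in Hh; lra. }
  assert (Hht : Rabs (h*t) < d).
  { rewrite Rabs_mult. apply Rle_lt_trans with (Rabs h * K).
    apply Rmult_le_compat_l. apply Rabs_pos. unfold K; pose proof (Rabs_pos s); lra.
    apply (Rmult_lt_compat_r K) in Hh; auto. unfold Rdiv in Hh.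
    rewrite Rmult_assoc, Rinv_l, Rmult_1_r in Hh; lra. }
  pose proof (Hd' (h*s) (h*t) Hhs Hht) as E.
  replace ((tau0 + h) * s) with (tau0*s + h*s) by ring.
  replace ((tau0 + h) * t) with (tau0*t + h*t) by ring.
  set (A := G l (tau0 * s + h * s) (tau0 * t + h * t)) in *.
  set (B := G l (tau0 * s) (tau0 * t)) in *.
  set (P := G (0%nat :: l) (tau0 * s) (tau0 * t)) in *.
  set (Q := G (1%nat :: l) (tau0 * s) (tau0 * t)) in *.
  replace ((A - B) / h - (P * s + Q * t)) with ((A - B - P * (h * s) - Q * (h * t)) / h)
    by (field; auto).
  unfold Rdiv. rewrite Rabs_mult, Rabs_inv.
  assert (Hah : 0 < Rabs h) by (apply Rabs_pos_lt; auto).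
  apply Rle_lt_trans with (eps / (2 * K) * (Rabs (h * s) + Rabs (h * t)) * / Rabs h).
  { apply Rmult_le_compat_r; auto. left; apply Rinv_0_lt_compat; auto. }
  rewrite !Rabs_mult.
  replace (eps / (2 * K) * (Rabs h * Rabs s + Rabs h * Rabs t) * / Rabs h)
    with (eps * ((Rabs s + Rabs t) / (2*K))) by (field; lra).
  assert ((Rabs s + Rabs t) / (2*K) < 1).
  { apply (Rmult_lt_reg_r (2*K)). lra. unfold Rdiv. rewrite Rmult_assoc, Rinv_l by lra.
    unfold K. pose proof (Rabs_pos s); pose proof (Rabs_pos t); lra. }
  assert (0 <= (Rabs s + Rabs t) / (2*K)).
  { apply Rmult_le_pos. pose proof (Rabs_pos s); pose proof (Rabs_pos t); lra.
    left; apply Rinv_0_lt_compat; lra. }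
  nra.
Qed.

Fixpoint lsum (N : nat) (g : list nat -> R) : R :=
  match N with
  | O => g nil
  | S N' => lsum N' (fun m => g (m ++ [0%nat])) + lsum N' (fun m => g (m ++ [1%nat]))
  end.

Definition good (l : list nat) := Forall (fun q => (q < 2)%nat) l.

Lemma good_app l j : good l -> (j < 2)%nat -> good (l ++ [j]).
Proof. intros H Hj. apply Forall_app; split; auto. Qed.

Lemma lsum_ext_good N : forall g h,
  (forall l, length l = N -> good l -> g l = h l) -> lsum N g = lsum N h.
Proof.
  induction N; simpl; intros g h H.
  - apply H; [reflexivity| constructor].
  - f_equal; apply IHN; intros l Hl Hg; (apply H;
      [rewrite length_app; simpl; lia | apply good_app; auto]).
Qed.

Lemma lsum_ext N g h : (forall l, g l = h l) -> lsum N g = lsum N h.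
Proof. intros; apply lsum_ext_good; auto. Qed.

Lemma lsum_plus N : forall g h, lsum N (fun l => g l + h l) = lsum N g + lsum N h.
Proof. induction N; simpl; intros; auto. rewrite !IHN; ring. Qed.

Lemma lsum_scal N : forall c g, lsum N (fun l => c * g l) = c * lsum N g.
Proof. induction N; simpl; intros; auto. rewrite !IHN; ring. Qed.

Lemma lsum_scal_r N c g : lsum N (fun l => g l * c) = lsum N g * c.
Proof. rewrite Rmult_comm, <- lsum_scal. apply lsum_ext; intros; ring. Qed.

Lemma lsum_abs N : forall g, Rabs (lsum N g) <= lsum N (fun l => Rabs (g l)).
Proof. induction N; simpl; intros. lra.
  eapply Rle_trans; [apply Rabs_triang|]. apply Rplus_le_compat; apply IHN. Qed.

Lemma lsum_le N : forall g h, (forall l, length l = N -> good l -> g l <= h l) ->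
  lsum N g <= lsum N h.
Proof.
  induction N; simpl; intros g h H.
  - apply H; [reflexivity| constructor].
  - apply Rplus_le_compat; apply IHN; intros l Hl Hg; (apply H;
      [rewrite length_app; simpl; lia | apply good_app; auto]).
Qed.

Fixpoint mono (l : list nat) (s t : R) : R :=
  match l with nil => 1 | q :: l' => (if Nat.eqb q 0 then s else t) * mono l' s t end.

Lemma mono_app l j s t : mono (l ++ [j]) s t = mono l s t * (if Nat.eqb j 0 then s else t).
Proof. induction l; simpl. ring. rewrite IHl; ring. Qed.

Lemma mono_scale l a s t : mono l (a*s) (a*t) = a ^ length l * mono l s t.
Proof. induction l; simpl. ring. rewrite IHl. destruct (Nat.eqb a0 0); ring. Qed.

Lemma mono_bound l s t : Rabs (mono l s t) <= (Rabs s + Rabs t) ^ length l.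
Proof.
  induction l; simpl. rewrite Rabs_R1; lra.
  rewrite Rabs_mult. apply Rmult_le_compat; try apply Rabs_pos; auto.
  pose proof (Rabs_pos s); pose proof (Rabs_pos t). destruct (Nat.eqb a 0); lra.
Qed.

Lemma SF_shift r G j : SF r G -> SF r (fun l => G (l ++ [j])).
Proof. intros HG l s t Hs Ht. exact (HG (l ++ [j]) s t Hs Ht). Qed.

Lemma pow_le_1 (x : R) n : Rabs x <= 1 -> Rabs (x ^ n) <= 1.
Proof. intros. rewrite <- RPow_abs. induction n; simpl. lra.
  apply Rle_trans with (1 * 1). apply Rmult_le_compat; auto; try apply Rabs_pos.
  apply pow_le, Rabs_pos. lra. Qed.

Lemma lsum_split N g s t :
  lsum (S N) (fun l => g l * mono l s t) =
  lsum N (fun m => g (m ++ [0%nat]) * mono m s t) * s +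
  lsum N (fun m => g (m ++ [1%nat]) * mono m s t) * t.
Proof.
  simpl. rewrite <- !lsum_scal_r. f_equal; apply lsum_ext; intro m;
  rewrite mono_app; simpl; ring.
Qed.

Lemma lsum_hom N g a s t :
  lsum N (fun l => g l * mono l (a*s) (a*t)) = a ^ N * lsum N (fun l => g l * mono l s t).
Proof.
  rewrite <- lsum_scal. apply lsum_ext_good. intros l Hl _.
  rewrite mono_scale, Hl. ring.
Qed.

Lemma expand N : forall r G, 0 < r -> SF r G ->
  (forall l, (length l < N)%nat -> good l -> G l 0 0 = 0) ->
  forall eps, 0 < eps -> exists d, 0 < d /\ d <= r /\ forall s t, Rabs s < d -> Rabs t < d ->
    Rabs (G nil s t - lsum N (fun l => G l 0 0 * mono l s t) / INR (fact N))
      <= eps * (Rabs s + Rabs t) ^ N.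
Proof.
  induction N; intros r G Hr HG HZ eps Heps.
  - assert (H0 : Rabs 0 < r) by (rewrite Rabs_R0; auto).
    destruct (HG nil 0 0 H0 H0) as [_ [_ C]].
    destruct (C eps Heps) as [d [Hd Hc]].
    exists (Rmin d r). split; [apply Rmin_pos; auto|split; [apply Rmin_r|]].
    intros s t Hs Ht. simpl. replace (G [] 0 0 * 1 / 1) with (G [] 0 0) by field.
    rewrite Rmult_1_r. left. apply Hc; rewrite Rminus_0_r;
      (eapply Rlt_le_trans; [eassumption| apply Rmin_l]).
  - pose proof (SF_shift r G 0 HG) as HG0.
    pose proof (SF_shift r G 1 HG) as HG1.
    assert (HZ0 : forall l, (length l < N)%nat -> good l -> G (l ++ [0%nat]) 0 0 = 0).
    { intros l Hl Hg. apply HZ. rewrite length_app; simpl; lia. apply good_app; auto. }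
    assert (HZ1 : forall l, (length l < N)%nat -> good l -> G (l ++ [1%nat]) 0 0 = 0).
    { intros l Hl Hg. apply HZ. rewrite length_app; simpl; lia. apply good_app; auto. }
    destruct (IHN r _ Hr HG0 HZ0 eps Heps) as [d0 [Hd0 [Hd0r E0]]].
    destruct (IHN r _ Hr HG1 HZ1 eps Heps) as [d1 [Hd1 [Hd1r E1]]].
    exists (Rmin d0 d1). split; [apply Rmin_pos; auto|split].
    { eapply Rle_trans; [apply Rmin_l| auto]. }
    intros s t Hs Ht.
    assert (Hs0 : Rabs s < d0) by (apply Rlt_le_trans with (1:=Hs); apply Rmin_l).
    assert (Hs1 : Rabs s < d1) by (apply Rlt_le_trans with (1:=Hs); apply Rmin_r).
    assert (Ht0 : Rabs t < d0) by (apply Rlt_le_trans with (1:=Ht); apply Rmin_l).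
    assert (Ht1 : Rabs t < d1) by (apply Rlt_le_trans with (1:=Ht); apply Rmin_r).
    set (P0 := lsum N (fun m => G (m ++ [0%nat]) 0 0 * mono m s t)).
    set (P1 := lsum N (fun m => G (m ++ [1%nat]) 0 0 * mono m s t)).
    assert (HL : lsum (S N) (fun l => G l 0 0 * mono l s t) = P0 * s + P1 * t)
      by apply lsum_split.
    rewrite HL.
    set (c := (P0 * s + P1 * t) / INR (fact (S N))).
    assert (Hfact : INR (fact (S N)) = INR (S N) * INR (fact N))
      by (change (fact (S N)) with (S N * fact N)%nat; rewrite mult_INR; reflexivity).
    assert (HfN : 0 < INR (fact N)) by (apply lt_0_INR, lt_O_fact).
    assert (HSN : 0 < INR (S N)) by (apply lt_0_INR; lia).
    assert (Hbox : forall c', Rabs c' <= 1 -> Rabs (c'*s) < r /\ Rabs (c'*t) < r).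
    { intros c' Hc'. rewrite !Rabs_mult. split.
      - apply Rle_lt_trans with (1 * Rabs s). apply Rmult_le_compat_r; auto; apply Rabs_pos.
        lra.
      - apply Rle_lt_trans with (1 * Rabs t). apply Rmult_le_compat_r; auto; apply Rabs_pos.
        lra. }
    destruct (mvt_gen (fun tau => G nil (tau*s) (tau*t) - c * tau ^ (S N))
      (fun tau => G [0%nat] (tau*s) (tau*t) * s + G [1%nat] (tau*s) (tau*t) * t
                 - c * (INR (S N) * tau ^ N)) 0 1) as [th [Hth Eth]].
    { intros c' Hc'. rewrite !Rminus_0_r, Rabs_R1 in Hc'.
      destruct (Hbox c' Hc') as [B1 B2].
      apply (derivable_pt_lim_minus (fun tau => G nil (tau*s) (tau*t)) (fun tau => c * tau ^ (S N))).
      - apply (chain r G nil s t c' HG B1 B2).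
      - apply (derivable_pt_lim_scal (fun tau => tau ^ (S N))).
        pose proof (derivable_pt_lim_pow c' (S N)) as Hp. simpl pred in Hp. exact Hp. }
    rewrite !Rminus_0_r, Rabs_R1 in Hth.
    cbv beta in Eth. replace (0 ^ S N) with 0 in Eth by (simpl; ring).
    rewrite pow1, !Rmult_1_l, !Rmult_0_l, Rmult_0_r, Rminus_0_r, Rmult_1_r in Eth.
    rewrite (HZ nil ltac:(simpl; lia) ltac:(constructor)) in Eth.
    destruct (Hbox th Hth) as [B1 B2].
    assert (Hth0 : Rabs (th*s) < d0 /\ Rabs (th*t) < d0).
    { rewrite !Rabs_mult; split.
      - apply Rle_lt_trans with (1 * Rabs s). apply Rmult_le_compat_r; auto; apply Rabs_pos. lra.
      - apply Rle_lt_trans with (1 * Rabs t). apply Rmult_le_compat_r; auto; apply Rabs_pos. lra. }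
    assert (Hth1 : Rabs (th*s) < d1 /\ Rabs (th*t) < d1).
    { rewrite !Rabs_mult; split.
      - apply Rle_lt_trans with (1 * Rabs s). apply Rmult_le_compat_r; auto; apply Rabs_pos. lra.
      - apply Rle_lt_trans with (1 * Rabs t). apply Rmult_le_compat_r; auto; apply Rabs_pos. lra. }
    pose proof (E0 (th*s) (th*t) (proj1 Hth0) (proj2 Hth0)) as F0.
    pose proof (E1 (th*s) (th*t) (proj1 Hth1) (proj2 Hth1)) as F1.
    simpl in F0, F1.
    rewrite lsum_hom in F0, F1. fold P0 in F0. fold P1 in F1.
    assert (Hnorm : Rabs (th * s) + Rabs (th * t) <= Rabs s + Rabs t).
    { rewrite !Rabs_mult. pose proof (Rabs_pos s); pose proof (Rabs_pos t).
      pose proof (Rabs_pos th). nra. }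
    assert (HnN : (Rabs (th * s) + Rabs (th * t)) ^ N <= (Rabs s + Rabs t) ^ N).
    { apply pow_incr. split; auto. pose proof (Rabs_pos (th*s)); pose proof (Rabs_pos (th*t)); lra. }
    set (e0 := G [0%nat] (th * s) (th * t) - th ^ N * P0 / INR (fact N)) in F0.
    set (e1 := G [1%nat] (th * s) (th * t) - th ^ N * P1 / INR (fact N)) in F1.
    assert (Hc : c * (INR (S N) * th ^ N) = th ^ N * P0 / INR (fact N) * s + th ^ N * P1 / INR (fact N) * t).
    { unfold c. rewrite Hfact. field. lra. }
    assert (Eq : G [] s t - c = e0 * s + e1 * t).
    { rewrite Hc in Eth. unfold e0, e1. lra. }
    rewrite Eq.
    eapply Rle_trans; [apply Rabs_triang|]. rewrite !Rabs_mult.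
    simpl pow.
    pose proof (Rabs_pos s); pose proof (Rabs_pos t).
    assert (Rabs e0 <= eps * (Rabs s + Rabs t) ^ N).
    { eapply Rle_trans; [exact F0|]. apply Rmult_le_compat_l; lra. }
    assert (Rabs e1 <= eps * (Rabs s + Rabs t) ^ N).
    { eapply Rle_trans; [exact F1|]. apply Rmult_le_compat_l; lra. }
    nra.
Qed.

Lemma close_eq (A B : R) : (forall eps, 0 < eps -> Rabs (A - B) < 2 * eps) -> A = B.
Proof.
  intros H. destruct (Req_dec A B) as [|Hn]; auto.
  assert (0 < Rabs (A - B)) by (apply Rabs_pos_lt; lra).
  specialize (H (Rabs (A - B) / 4) ltac:(lra)). lra.
Qed.

Lemma schwarz r G l x y : SF r G -> Rabs x < r -> Rabs y < r ->
  G (0%nat :: 1%nat :: l) x y = G (1%nat :: 0%nat :: l) x y.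
Proof.
  intros HG Hx Hy. symmetry. apply close_eq. intros eps Heps.
  destruct (HG (1%nat::0%nat::l) x y Hx Hy) as [_ [_ Ca]].
  destruct (HG (0%nat::1%nat::l) x y Hx Hy) as [_ [_ Cb]].
  destruct (Ca eps Heps) as [da [Hda Ca']].
  destruct (Cb eps Heps) as [db [Hdb Cb']].
  set (m := r - Rmax (Rabs x) (Rabs y)).
  assert (Hm : 0 < m) by (unfold m; apply Rmax_case; lra).
  assert (Mx : Rabs x <= Rmax (Rabs x) (Rabs y)) by apply Rmax_l.
  assert (My : Rabs y <= Rmax (Rabs x) (Rabs y)) by apply Rmax_r.
  set (h := Rmin m (Rmin da db) / 2).
  assert (Hmin : 0 < Rmin m (Rmin da db)) by (apply Rmin_pos; auto; apply Rmin_pos; auto).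
  assert (Hh : 0 < h) by (unfold h; lra).
  assert (Hhm : h < m) by (unfold h; pose proof (Rmin_l m (Rmin da db)); lra).
  assert (Hha : h < da) by (unfold h; pose proof (Rmin_r m (Rmin da db)); pose proof (Rmin_l da db); lra).
  assert (Hhb : h < db) by (unfold h; pose proof (Rmin_r m (Rmin da db)); pose proof (Rmin_r da db); lra).
  assert (Bx : forall c, Rabs (c - x) <= h -> Rabs c < r).
  { intros c Hc. replace c with (x + (c - x)) by ring.
    eapply Rle_lt_trans; [apply Rabs_triang|]. unfold m in Hhm. lra. }
  assert (By : forall c, Rabs (c - y) <= h -> Rabs c < r).
  { intros c Hc. replace c with (y + (c - y)) by ring.
    eapply Rle_lt_trans; [apply Rabs_triang|]. unfold m in Hhm. lra. }
  assert (Ehh : Rabs (x + h - x) = h) by (replace (x+h-x) with h by ring; rewrite Rabs_right; lra).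
  assert (Ehy : Rabs (y + h - y) = h) by (replace (y+h-y) with h by ring; rewrite Rabs_right; lra).
  assert (Bxh : Rabs (x+h) < r) by (apply Bx; lra).
  assert (Byh : Rabs (y+h) < r) by (apply By; lra).
  destruct (mvt_gen (fun a => G l a (y+h) - G l a y)
     (fun a => G (0%nat::l) a (y+h) - G (0%nat::l) a y) x (x+h)) as [xi [Hxi Exi]].
  { intros c Hc. rewrite Ehh in Hc. pose proof (Bx c Hc).
    apply (derivable_pt_lim_minus (fun a => G l a (y+h)) (fun a => G l a y));
      [apply (HG l c (y+h)) | apply (HG l c y)]; auto. }
  rewrite Ehh in Hxi.
  destruct (mvt_gen (fun b => G (0%nat::l) xi b) (fun b => G (1%nat::0%nat::l) xi b) y (y+h))
    as [eta [Heta Eeta]].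
  { intros c Hc. rewrite Ehy in Hc. apply (HG (0%nat::l) xi c); auto. }
  rewrite Ehy in Heta.
  destruct (mvt_gen (fun b => G l (x+h) b - G l x b)
     (fun b => G (1%nat::l) (x+h) b - G (1%nat::l) x b) y (y+h)) as [eta' [Heta' Eeta']].
  { intros c Hc. rewrite Ehy in Hc. pose proof (By c Hc).
    apply (derivable_pt_lim_minus (fun b => G l (x+h) b) (fun b => G l x b));
      [apply (HG l (x+h) c) | apply (HG l x c)]; auto. }
  rewrite Ehy in Heta'.
  destruct (mvt_gen (fun a => G (1%nat::l) a eta') (fun a => G (0%nat::1%nat::l) a eta') x (x+h))
    as [xi' [Hxi' Exi']].
  { intros c Hc. rewrite Ehh in Hc. apply (HG (1%nat::l) c eta'); auto. }
  rewrite Ehh in Hxi'.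
  cbv beta in Exi, Eeta, Eeta', Exi'.
  replace (x + h - x) with h in Exi, Exi' by ring.
  replace (y + h - y) with h in Eeta, Eeta' by ring.
  assert (Eq : G (1%nat::0%nat::l) xi eta = G (0%nat::1%nat::l) xi' eta').
  { apply (Rmult_eq_reg_r (h*h)); [|nra].
    transitivity (G l (x+h) (y+h) - G l (x+h) y - (G l x (y+h) - G l x y)).
    - rewrite Exi. replace (G (0%nat :: l) xi (y + h) - G (0%nat :: l) xi y) with
        (G (1%nat :: 0%nat :: l) xi eta * h) by (rewrite <- Eeta; ring). ring.
    - replace (G l (x + h) (y + h) - G l (x + h) y - (G l x (y + h) - G l x y))
        with (G l (x + h) (y + h) - G l x (y + h) - (G l (x + h) y - G l x y)) by ring.
      rewrite Eeta'. replace (G (1%nat :: l) (x + h) eta' - G (1%nat :: l) x eta') with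
        (G (0%nat :: 1%nat :: l) xi' eta' * h) by (rewrite <- Exi'; ring). ring. }
  assert (A1 : Rabs (G (1%nat::0%nat::l) xi eta - G (1%nat::0%nat::l) x y) < eps)
    by (apply Ca'; lra).
  assert (A2 : Rabs (G (0%nat::1%nat::l) xi' eta' - G (0%nat::1%nat::l) x y) < eps)
    by (apply Cb'; lra).
  rewrite Eq in A1.
  replace (G (1%nat :: 0%nat :: l) x y - G (0%nat :: 1%nat :: l) x y) with
    ((G (0%nat :: 1%nat :: l) xi' eta' - G (0%nat :: 1%nat :: l) x y)
     - (G (0%nat :: 1%nat :: l) xi' eta' - G (1%nat :: 0%nat :: l) x y)) by ring.
  eapply Rle_lt_trans; [apply Rabs_triang|]. rewrite Rabs_Ropp. lra.
Qed.

Definition EQB (r : R) (G : list nat -> R -> R -> R) l1 l2 :=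
  forall x y, Rabs x < r -> Rabs y < r -> G l1 x y = G l2 x y.

Lemma cong r G l1 l2 c : SF r G -> EQB r G l1 l2 -> (c < 2)%nat -> EQB r G (c::l1) (c::l2).
Proof.
  intros HG HE Hc x y Hx Hy.
  destruct (HG l1 x y Hx Hy) as [D10 [D11 _]].
  destruct (HG l2 x y Hx Hy) as [D20 [D21 _]].
  destruct c as [|[|c]]; [| |lia].
  - apply (uniqueness_limite (fun a => G l2 a y) x); auto.
    apply (dpl_local (fun a => G l1 a y) _ x _ (r - Rabs x)); [lra| |auto].
    intros a Ha. apply HE; auto.
    replace a with (x + (a - x)) by ring.
    eapply Rle_lt_trans; [apply Rabs_triang|]. lra.
  - apply (uniqueness_limite (fun a => G l2 x a) y); auto.
    apply (dpl_local (fun a => G l1 x a) _ y _ (r - Rabs y)); [lra| |auto].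
    intros a Ha. apply HE; auto.
    replace a with (y + (a - y)) by ring.
    eapply Rle_lt_trans; [apply Rabs_triang|]. lra.
Qed.

Lemma EQB_sym r G l1 l2 : EQB r G l1 l2 -> EQB r G l2 l1.
Proof. intros H x y Hx Hy; symmetry; auto. Qed.

Lemma EQB_trans r G l1 l2 l3 : EQB r G l1 l2 -> EQB r G l2 l3 -> EQB r G l1 l3.
Proof. intros H1 H2 x y Hx Hy; rewrite H1; auto. Qed.

Lemma swap r G p : SF r G -> good p -> forall a b l, (a < 2)%nat -> (b < 2)%nat ->
  EQB r G (p ++ a :: b :: l) (p ++ b :: a :: l).
Proof.
  intros HG. induction p as [|c p IH]; intros Hp a b l Ha Hb.
  - simpl. destruct a as [|[|a]]; destruct b as [|[|b]]; try lia;
      try (intros x y Hx Hy; reflexivity).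
    + intros x y Hx Hy; apply (schwarz r G l x y HG Hx Hy).
    + intros x y Hx Hy; symmetry; apply (schwarz r G l x y HG Hx Hy).
  - inversion Hp; subst. simpl. apply cong; auto.
Qed.

Definition canon (N q : nat) : list nat := repeat 0%nat (N - q) ++ repeat 1%nat q.

Lemma bubble r G a R : SF r G -> EQB r G (1%nat :: repeat 0%nat a ++ R) (repeat 0%nat a ++ 1%nat :: R).
Proof.
  intros HG. induction a as [|a IH].
  - intros x y Hx Hy; reflexivity.
  - simpl. eapply EQB_trans.
    + apply (swap r G nil HG ltac:(constructor) 1 0 (repeat 0%nat a ++ R)); lia.
    + simpl. apply cong; auto.
Qed.

Lemma count_t_0 l : count_t (0%nat :: l) = count_t l.
Proof. unfold count_t. apply count_occ_cons_neq. lia. Qed.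

Lemma count_t_1 l : count_t (1%nat :: l) = S (count_t l).
Proof. unfold count_t. apply count_occ_cons_eq. reflexivity. Qed.

Lemma count_le l : good l -> (count_t l <= length l)%nat.
Proof.
  induction l as [|c l IH]; intros Hg. simpl. unfold count_t; simpl; lia.
  inversion Hg; subst. destruct c as [|[|c]]; try lia.
  - rewrite count_t_0; simpl; specialize (IH H2); lia.
  - rewrite count_t_1; simpl; specialize (IH H2); lia.
Qed.

Lemma sym r G l : SF r G -> good l -> EQB r G l (canon (length l) (count_t l)).
Proof.
  intros HG. induction l as [|c l IH]; intros Hg.
  - intros x y _ _; reflexivity.
  - inversion Hg; subst. pose proof (count_le l H2) as Hle.
    eapply EQB_trans; [apply cong; [auto|apply IH; auto|auto]|].
    destruct c as [|[|c]]; try lia.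
    + rewrite count_t_0. unfold canon. simpl length.
      replace (S (length l) - count_t l)%nat with (S (length l - count_t l)) by lia.
      intros x y _ _; reflexivity.
    + rewrite count_t_1. unfold canon. simpl length.
      replace (S (length l) - S (count_t l))%nat with (length l - count_t l)%nat by lia.
      apply bubble; auto.
Qed.

Lemma canon_length N q : (q <= N)%nat -> length (canon N q) = N.
Proof. intros; unfold canon; rewrite length_app, !repeat_length; lia. Qed.

Lemma canon_count N q : count_t (canon N q) = q.
Proof.
  unfold canon. induction (N - q)%nat as [|a IH]; simpl.
  - induction q; simpl. reflexivity. rewrite count_t_1, IHq; reflexivity.
  - rewrite count_t_0; auto.
Qed.

Lemma canon_good N q : good (canon N q).
Proof.
  unfold canon, good. apply Forall_app; split; apply Forall_forall;
    intros z Hz; apply repeat_spec in Hz; lia.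
Qed.

Lemma sym2 r G l1 l2 : SF r G -> good l1 -> good l2 -> length l1 = length l2 ->
  count_t l1 = count_t l2 -> EQB r G l1 l2.
Proof.
  intros HG H1 H2 HL HC. eapply EQB_trans; [apply sym; eauto|].
  rewrite HL, HC. apply EQB_sym, sym; auto.
Qed.

Fixpoint bin (n k : nat) : R :=
  match n with
  | O => match k with O => 1 | S _ => 0 end
  | S n' => match k with O => 1 | S k' => bin n' k' + bin n' k end
  end.

Lemma bin_nonneg n : forall k, 0 <= bin n k.
Proof. induction n; intros [|k]; simpl; try lra. pose proof (IHn k); pose proof (IHn (S k)); lra. Qed.

Lemma bin_pos n : forall k, (k <= n)%nat -> 0 < bin n k.
Proof. induction n; intros [|k] Hk; simpl; try lra; try lia.
  pose proof (IHn k ltac:(lia)); pose proof (bin_nonneg n (S k)); lra. Qed.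

Lemma bin_over n : forall k, (n < k)%nat -> bin n k = 0.
Proof. induction n; intros [|k] Hk; simpl; try lra; try lia.
  rewrite !IHn by lia. ring. Qed.

Lemma rsum_shift M f : rsum (S M) f = f 0%nat + rsum M (fun q => f (S q)).
Proof. induction M; simpl in *. ring. rewrite IHM. ring. Qed.

Lemma rsum_ext M f g : (forall q, (q < M)%nat -> f q = g q) -> rsum M f = rsum M g.
Proof. induction M; simpl; intros H; auto. rewrite IHM, H; auto. Qed.

Lemma rsum_plus M f g : rsum M (fun q => f q + g q) = rsum M f + rsum M g.
Proof. induction M; simpl; auto. ring. rewrite IHM; ring. Qed.

Lemma rsum_scal M c f : rsum M (fun q => c * f q) = c * rsum M f.
Proof. induction M; simpl; auto. ring. rewrite IHM; ring. Qed.

Lemma rsum_minus M f g : rsum M (fun q => f q - g q) = rsum M f - rsum M g.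
Proof. induction M; simpl; auto. ring. rewrite IHM; ring. Qed.

Lemma rsum_abs M f : Rabs (rsum M f) <= rsum M (fun q => Rabs (f q)).
Proof. induction M; simpl. rewrite Rabs_R0; lra.
  eapply Rle_trans; [apply Rabs_triang|]. lra. Qed.

Lemma rsum_le M f g : (forall q, (q < M)%nat -> f q <= g q) -> rsum M f <= rsum M g.
Proof. induction M; simpl; intros H. lra. apply Rplus_le_compat; auto. Qed.

Lemma count_app0 m : count_t (m ++ [0%nat]) = count_t m.
Proof. unfold count_t. rewrite count_occ_app. simpl. destruct (Nat.eq_dec 0 1); [lia|]. lia. Qed.

Lemma count_app1 m : count_t (m ++ [1%nat]) = S (count_t m).
Proof. unfold count_t. rewrite count_occ_app. simpl. destruct (Nat.eq_dec 1 1); [|lia]. lia. Qed.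

Lemma lsum_count N : forall g, lsum N (fun l => g (count_t l)) = rsum (S N) (fun q => bin N q * g q).
Proof.
  induction N; intros g.
  - simpl. unfold count_t; simpl. ring.
  - simpl lsum.
    rewrite (lsum_ext N (fun m => g (count_t (m ++ [0%nat]))) (fun m => g (count_t m))) by (intro; rewrite count_app0; auto).
    rewrite (lsum_ext N (fun m => g (count_t (m ++ [1%nat]))) (fun m => (fun q => g (S q)) (count_t m))) by (intro; rewrite count_app1; auto).
    rewrite (IHN g), (IHN (fun q => g (S q))).
    rewrite (rsum_shift (S N) (fun q => bin (S N) q * g q)).
    simpl bin at 1.
    rewrite (rsum_ext (S N) (fun q => bin (S N) (S q) * g (S q))
       (fun q => bin N q * g (S q) + bin N (S q) * g (S q))) by (intros; simpl; ring).
    rewrite rsum_plus.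
    rewrite (rsum_shift N (fun q => bin N q * g q)).
    replace (bin N 0 * g 0%nat) with (g 0%nat) by (destruct N; simpl; ring).
    assert (E : rsum (S N) (fun q => bin N (S q) * g (S q)) = rsum N (fun q => bin N (S q) * g (S q))).
    { simpl. rewrite bin_over by lia. ring. }
    rewrite E. replace (bin (S N) 0) with 1 by reflexivity. ring.
Qed.

Lemma abs_small (a C : R) : 0 <= C -> (forall eps, 0 < eps -> Rabs a <= eps * C) -> a = 0.
Proof.
  intros HC H. destruct (Req_dec a 0) as [|Hn]; auto.
  assert (Ha : 0 < Rabs a) by (apply Rabs_pos_lt; auto).
  specialize (H (Rabs a / (2 * (C + 1))) ltac:(apply Rdiv_lt_0_compat; lra)).
  assert (Rabs a / (2 * (C + 1)) * C < Rabs a).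
  { apply (Rmult_lt_reg_r (2*(C+1))). lra.
    replace (Rabs a / (2 * (C + 1)) * C * (2 * (C + 1))) with (Rabs a * C) by (field; lra).
    nra. }
  lra.
Qed.

Lemma poly_unique M : forall b : nat -> R,
  (forall t, 0 < t < 1 -> rsum M (fun q => b q * t ^ q) = 0) ->
  forall q, (q < M)%nat -> b q = 0.
Proof.
  induction M; intros b H q Hq; [lia|].
  assert (Hsplit : forall t, rsum (S M) (fun q => b q * t ^ q) =
                     b 0%nat + t * rsum M (fun q => b (S q) * t ^ q)).
  { intro t. rewrite rsum_shift, <- rsum_scal. simpl. f_equal. ring.
    apply rsum_ext; intros; ring. }
  set (B := rsum M (fun q => Rabs (b (S q)))).
  assert (HB : 0 <= B) by (unfold B; apply Rle_trans with (rsum M (fun _ => 0));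
    [clear; induction M; simpl; lra| apply rsum_le; intros; apply Rabs_pos]).
  assert (Hb0 : b 0%nat = 0).
  { apply (abs_small _ (B + 1)); [lra|]. intros eps Heps.
    set (t := Rmin (1/2) eps).
    assert (Ht : 0 < t < 1) by (unfold t; split; [apply Rmin_pos; lra| pose proof (Rmin_l (1/2) eps); lra]).
    assert (Hte : t <= eps) by apply Rmin_r.
    pose proof (H t Ht) as Ht0. rewrite Hsplit in Ht0.
    replace (b 0%nat) with (- (t * rsum M (fun q => b (S q) * t ^ q))) by lra.
    rewrite Rabs_Ropp, Rabs_mult, (Rabs_right t) by lra.
    assert (Rabs (rsum M (fun q => b (S q) * t ^ q)) <= B).
    { eapply Rle_trans; [apply rsum_abs|]. apply rsum_le; intros.
      rewrite Rabs_mult. pose proof (Rabs_pos (b (S q0))).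
      assert (Rabs (t ^ q0) <= 1) by (apply pow_le_1; rewrite Rabs_right; lra).
      nra. }
    pose proof (Rabs_pos (rsum M (fun q => b (S q) * t ^ q))). nra. }
  destruct q as [|q]; auto.
  apply (IHM (fun q => b (S q))); [|lia].
  intros t Ht. pose proof (H t Ht) as E. rewrite Hsplit, Hb0 in E.
  apply (Rmult_eq_reg_l t); [|lra]. lra.
Qed.

Lemma mono_1 l t : good l -> mono l 1 t = t ^ count_t l.
Proof.
  induction l as [|c l IH]; intros Hg. reflexivity.
  inversion Hg; subst. destruct c as [|[|c]]; try lia.
  - rewrite count_t_0. simpl. rewrite IH; auto; ring.
  - rewrite count_t_1. simpl. rewrite IH; auto.
Qed.

Lemma vanish r W k : 0 < r -> SF r W ->
  (forall l, (length l < k)%nat -> good l -> W l 0 0 = 0) ->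
  (forall eps, 0 < eps -> exists d, 0 < d /\ forall s t, Rabs s < d -> Rabs t < d ->
      Rabs (W nil s t) <= eps * (Rabs s + Rabs t) ^ k) ->
  forall l, length l = k -> good l -> W l 0 0 = 0.
Proof.
  intros Hr HW HZ Ho.
  set (poly := fun s t => lsum k (fun l => W l 0 0 * mono l s t) / INR (fact k)).
  assert (HfN : 0 < INR (fact k)) by (apply lt_0_INR, lt_O_fact).
  assert (S1 : forall eps, 0 < eps -> exists d, 0 < d /\ forall s t, Rabs s < d -> Rabs t < d ->
      Rabs (poly s t) <= 2 * eps * (Rabs s + Rabs t) ^ k).
  { intros eps Heps.
    destruct (expand k r W Hr HW HZ eps Heps) as [d1 [Hd1 [_ E1]]].
    destruct (Ho eps Heps) as [d2 [Hd2 E2]].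
    exists (Rmin d1 d2). split; [apply Rmin_pos; auto|]. intros s t Hs Ht.
    assert (Rabs s < d1) by (apply Rlt_le_trans with (1:=Hs); apply Rmin_l).
    assert (Rabs t < d1) by (apply Rlt_le_trans with (1:=Ht); apply Rmin_l).
    assert (Rabs s < d2) by (apply Rlt_le_trans with (1:=Hs); apply Rmin_r).
    assert (Rabs t < d2) by (apply Rlt_le_trans with (1:=Ht); apply Rmin_r).
    specialize (E1 s t ltac:(auto) ltac:(auto)). specialize (E2 s t ltac:(auto) ltac:(auto)).
    unfold poly.
    replace (lsum k (fun l => W l 0 0 * mono l s t) / INR (fact k)) with
      (W [] s t - (W [] s t - lsum k (fun l => W l 0 0 * mono l s t) / INR (fact k))) by ring.
    eapply Rle_trans; [apply Rabs_triang|]. rewrite Rabs_Ropp. lra. }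
  assert (S2 : forall s t, poly s t = 0).
  { intros s t. pose proof (Rabs_pos s); pose proof (Rabs_pos t).
    apply (abs_small _ (2 * (Rabs s + Rabs t) ^ k)).
    { apply Rmult_le_pos; [lra| apply pow_le; lra]. }
    intros eps Heps. destruct (S1 eps Heps) as [d [Hd Ed]].
    set (lam := d / (2 * (Rabs s + Rabs t + 1))).
    assert (Hl : 0 < lam) by (unfold lam; apply Rdiv_lt_0_compat; lra).
    assert (Hls : Rabs (lam * s) < d /\ Rabs (lam * t) < d).
    { rewrite !Rabs_mult, (Rabs_right lam) by lra.
      assert (E : lam * (Rabs s + Rabs t + 1) = d / 2) by (unfold lam; field; lra).
      split; nra. }
    specialize (Ed (lam*s) (lam*t) (proj1 Hls) (proj2 Hls)).
    unfold poly in Ed. rewrite lsum_hom in Ed.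
    assert (Hlk : 0 < lam ^ k) by (apply pow_lt; auto).
    assert (N1 : Rabs (lam * s) + Rabs (lam * t) = lam * (Rabs s + Rabs t))
      by (rewrite !Rabs_mult, Rabs_right by lra; ring).
    rewrite N1, Rpow_mult_distr in Ed.
    replace (lam ^ k * lsum k (fun l => W l 0 0 * mono l s t) / INR (fact k)) with
      (lam ^ k * poly s t) in Ed by (unfold poly, Rdiv; ring).
    rewrite Rabs_mult, (Rabs_right (lam ^ k)) in Ed by lra.
    apply (Rmult_le_reg_l (lam ^ k)); auto. lra. }
  set (w := fun q => W (canon k q) 0 0).
  assert (S3 : forall t, 0 < t < 1 -> rsum (S k) (fun q => (bin k q * w q) * t ^ q) = 0).
  { intros t Ht. pose proof (S2 1 t) as E. unfold poly in E.
    assert (E' : lsum k (fun l => W l 0 0 * mono l 1 t) = 0).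
    { apply (Rmult_eq_reg_r (/ INR (fact k))). rewrite Rmult_0_l; exact E.
      apply Rinv_neq_0_compat; lra. }
    rewrite (lsum_ext_good k _ (fun l => (fun q => w q * t ^ q) (count_t l))) in E'.
    - rewrite (lsum_count k (fun q => w q * t ^ q)) in E'. rewrite <- E'. apply rsum_ext; intros; ring.
    - intros l Hl Hg. unfold w. rewrite mono_1 by auto. f_equal.
      rewrite <- Hl. apply (sym r W l HW Hg); rewrite Rabs_R0; auto. }
  intros l Hl Hg.
  rewrite (sym r W l HW Hg 0 0) by (rewrite Rabs_R0; auto).
  rewrite Hl. fold (w (count_t l)).
  pose proof (count_le l Hg) as Hc.
  pose proof (poly_unique (S k) _ S3 (count_t l) ltac:(lia)) as Hb.
  pose proof (bin_pos k (count_t l) ltac:(lia)).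
  apply (Rmult_eq_reg_l (bin k (count_t l))); lra.
Qed.

Ltac fin_eqb := repeat match goal with
  | H : (_ =? _) = true |- _ => apply Nat.eqb_eq in H
  | H : (_ =? _) = false |- _ => apply Nat.eqb_neq in H end;
  simpl; try reflexivity; try lia.

Lemma J0_even m l : J0 (2*m) l = if Nat.eqb l (2*m+1) then -1 else 0.
Proof.
  unfold J0. rewrite Nat.div2_even, Nat.even_even.
  destruct (Nat.Even_or_Odd l) as [[j ->]|[j ->]].
  - rewrite Nat.div2_even, Nat.even_even.
    destruct (Nat.eqb m j) eqn:E1; destruct (Nat.eqb (2*j) (2*m+1)) eqn:E; fin_eqb.
  - rewrite Nat.div2_odd', Nat.even_odd.
    destruct (Nat.eqb m j) eqn:E1; destruct (Nat.eqb (2*j+1) (2*m+1)) eqn:E; fin_eqb.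
Qed.

Lemma J0_odd m l : J0 (2*m+1) l = if Nat.eqb l (2*m) then 1 else 0.
Proof.
  unfold J0. rewrite Nat.div2_odd', Nat.even_odd.
  destruct (Nat.Even_or_Odd l) as [[j ->]|[j ->]].
  - rewrite Nat.div2_even, Nat.even_even.
    destruct (Nat.eqb m j) eqn:E1; destruct (Nat.eqb (2*j) (2*m)) eqn:E; fin_eqb.
  - rewrite Nat.div2_odd', Nat.even_odd.
    destruct (Nat.eqb m j) eqn:E1; destruct (Nat.eqb (2*j+1) (2*m)) eqn:E; fin_eqb.
Qed.

Lemma rsum_delta N j c f : (j < N)%nat ->
  rsum N (fun l => (if Nat.eqb l j then c else 0) * f l) = c * f j.
Proof.
  induction N; intros Hj; [lia|]. simpl.
  destruct (Nat.eqb N j) eqn:E.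
  - apply Nat.eqb_eq in E; subst.
    assert (rsum j (fun l => (if Nat.eqb l j then c else 0) * f l) = 0).
    { clear IHN Hj. assert (forall M, (M <= j)%nat -> rsum M (fun l => (if Nat.eqb l j then c else 0) * f l) = 0).
      { induction M; intros HM; simpl; auto. rewrite IHM by lia.
        replace (Nat.eqb M j) with false by (symmetry; apply Nat.eqb_neq; lia). ring. }
      apply H; lia. }
    rewrite H; ring.
  - apply Nat.eqb_neq in E. rewrite IHN by lia. ring.
Qed.

Definition small (k : nat) (f : R -> R -> R) : Prop :=
  forall eps, 0 < eps -> exists d, 0 < d /\ forall s t, Rabs s < d -> Rabs t < d ->
    Rabs (f s t) <= eps * (Rabs s + Rabs t) ^ k.

Definition big (k : nat) (f : R -> R -> R) : Prop :=
  exists C d, 0 < d /\ forall s t, Rabs s < d -> Rabs t < d ->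
    Rabs (f s t) <= C * (Rabs s + Rabs t) ^ k.

Lemma small_ext r k f g : 0 < r -> (forall s t, Rabs s < r -> Rabs t < r -> f s t = g s t) ->
  small k f -> small k g.
Proof.
  intros Hr He Hf eps Heps. destruct (Hf eps Heps) as [d [Hd E]].
  exists (Rmin d r). split; [apply Rmin_pos; auto|]. intros s t Hs Ht.
  rewrite <- He.
  - apply E; (eapply Rlt_le_trans; [eassumption| apply Rmin_l]).
  - apply Rlt_le_trans with (1:=Hs); apply Rmin_r.
  - apply Rlt_le_trans with (1:=Ht); apply Rmin_r.
Qed.

Lemma small_rsum k N F : (forall l, (l < N)%nat -> small k (F l)) ->
  small k (fun s t => rsum N (fun l => F l s t)).
Proof.
  induction N; intros H eps Heps.
  - exists 1. split; [lra|]. intros s t _ _. simpl. rewrite Rabs_R0.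
    apply Rmult_le_pos; [lra| apply pow_le]. pose proof (Rabs_pos s); pose proof (Rabs_pos t); lra.
  - destruct (IHN (fun l Hl => H l ltac:(lia)) (eps/2) ltac:(lra)) as [d1 [Hd1 E1]].
    destruct (H N ltac:(lia) (eps/2) ltac:(lra)) as [d2 [Hd2 E2]].
    exists (Rmin d1 d2). split; [apply Rmin_pos; auto|]. intros s t Hs Ht. simpl.
    specialize (E1 s t ltac:(apply Rlt_le_trans with (1:=Hs); apply Rmin_l) ltac:(apply Rlt_le_trans with (1:=Ht); apply Rmin_l)).
    specialize (E2 s t ltac:(apply Rlt_le_trans with (1:=Hs); apply Rmin_r) ltac:(apply Rlt_le_trans with (1:=Ht); apply Rmin_r)).
    eapply Rle_trans; [apply Rabs_triang|]. lra.
Qed.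

Lemma small_mul k e g : small 0 e -> big k g -> small k (fun s t => e s t * g s t).
Proof.
  intros He [C [d1 [Hd1 Hg]]] eps Heps.
  destruct (He (eps / (Rabs C + 1)) ltac:(apply Rdiv_lt_0_compat; pose proof (Rabs_pos C); lra))
    as [d2 [Hd2 E]].
  exists (Rmin d1 d2). split; [apply Rmin_pos; auto|]. intros s t Hs Ht.
  specialize (Hg s t ltac:(apply Rlt_le_trans with (1:=Hs); apply Rmin_l) ltac:(apply Rlt_le_trans with (1:=Ht); apply Rmin_l)).
  specialize (E s t ltac:(apply Rlt_le_trans with (1:=Hs); apply Rmin_r) ltac:(apply Rlt_le_trans with (1:=Ht); apply Rmin_r)).
  simpl in E. rewrite Rmult_1_r in E.
  rewrite Rabs_mult.
  set (P := (Rabs s + Rabs t) ^ k) in *.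
  assert (HP : 0 <= P) by (unfold P; apply pow_le; pose proof (Rabs_pos s); pose proof (Rabs_pos t); lra).
  assert (Rabs (g s t) <= (Rabs C + 1) * P) by (pose proof (Rle_abs C); nra).
  apply Rle_trans with (eps / (Rabs C + 1) * ((Rabs C + 1) * P)).
  - apply Rmult_le_compat; auto; apply Rabs_pos.
  - right. field. pose proof (Rabs_pos C); lra.
Qed.

Lemma fin_min N (P : nat -> R -> Prop) :
  (forall j d d', 0 < d' <= d -> P j d -> P j d') ->
  (forall j, (j < N)%nat -> exists d, 0 < d /\ P j d) ->
  exists d, 0 < d /\ forall j, (j < N)%nat -> P j d.
Proof.
  intros Hm. induction N; intros H.
  - exists 1; split; [lra| intros; lia].
  - destruct IHN as [d1 [Hd1 E1]]. { intros j Hj; apply H; lia. }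
    destruct (H N ltac:(lia)) as [d2 [Hd2 E2]].
    exists (Rmin d1 d2). split; [apply Rmin_pos; auto|]. intros j Hj.
    destruct (Nat.eq_dec j N) as [->|Hne].
    + apply (Hm N d2); auto. split; [apply Rmin_pos; auto| apply Rmin_r].
    + apply (Hm j d1); [split; [apply Rmin_pos; auto| apply Rmin_l]| apply E1; lia].
Qed.

Lemma cmul_assoc a b c : cmul a (cmul b c) = cmul (cmul a b) c.
Proof. destruct a, b, c; unfold cmul; simpl; f_equal; ring. Qed.

Lemma LC N s t :
  lsum N (fun l => fst (cpow 0 1 (count_t l)) * mono l s t) = fst (cpow s t N) /\
  lsum N (fun l => snd (cpow 0 1 (count_t l)) * mono l s t) = snd (cpow s t N).
Proof.
  induction N as [|N [IH1 IH2]].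
  - simpl. unfold count_t; simpl. split; ring.
  - simpl lsum. simpl cpow.
    rewrite (lsum_ext N (fun m => fst (cpow 0 1 (count_t (m ++ [0%nat]))) * mono (m ++ [0%nat]) s t)
      (fun m => fst (cpow 0 1 (count_t m)) * mono m s t * s))
      by (intro m; rewrite count_app0, mono_app; simpl; ring).
    rewrite (lsum_ext N (fun m => fst (cpow 0 1 (count_t (m ++ [1%nat]))) * mono (m ++ [1%nat]) s t)
      (fun m => (-1) * (snd (cpow 0 1 (count_t m)) * mono m s t * t)))
      by (intro m; rewrite count_app1, mono_app; simpl; unfold cmul; simpl; ring).
    rewrite (lsum_ext N (fun m => snd (cpow 0 1 (count_t (m ++ [0%nat]))) * mono (m ++ [0%nat]) s t)
      (fun m => snd (cpow 0 1 (count_t m)) * mono m s t * s))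
      by (intro m; rewrite count_app0, mono_app; simpl; ring).
    rewrite (lsum_ext N (fun m => snd (cpow 0 1 (count_t (m ++ [1%nat]))) * mono (m ++ [1%nat]) s t)
      (fun m => fst (cpow 0 1 (count_t m)) * mono m s t * t))
      by (intro m; rewrite count_app1, mono_app; simpl; unfold cmul; simpl; ring).
    rewrite lsum_scal, !lsum_scal_r, IH1, IH2. unfold cmul; simpl. split; ring.
Qed.

Lemma fam_unique r f D1 D2 : 0 < r -> is_partials 2 (ball 2 r) f D1 -> is_partials 2 (ball 2 r) f D2 ->
  forall l, good l -> forall s t, Rabs s < r -> Rabs t < r -> D1 l (pt s t) = D2 l (pt s t).
Proof.
  intros Hr H1 H2.
  pose proof (SF_of_partials r f D1 Hr H1) as S1.
  pose proof (SF_of_partials r f D2 Hr H2) as S2.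
  induction l as [|c l IH]; intros Hg s t Hs Ht.
  - destruct H1 as [A _]; destruct H2 as [B _].
    rewrite A, B; auto; apply ball_pt; auto.
  - inversion Hg; subst.
    destruct (S1 l s t Hs Ht) as [D10 [D11 _]].
    destruct (S2 l s t Hs Ht) as [D20 [D21 _]].
    cbv beta in D10, D11, D20, D21.
    destruct c as [|[|c]]; [| |lia].
    + apply (uniqueness_limite (fun a => D2 l (pt a t)) s); auto.
      apply (dpl_local (fun a => D1 l (pt a t)) _ s _ (r - Rabs s)); [lra| |auto].
      intros a Ha. apply IH; auto.
      replace a with (s + (a - s)) by ring.
      eapply Rle_lt_trans; [apply Rabs_triang|]. lra.
    + apply (uniqueness_limite (fun a => D2 l (pt s a)) t); auto.
      apply (dpl_local (fun a => D1 l (pt s a)) _ t _ (r - Rabs t)); [lra| |auto].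
      intros a Ha. apply IH; auto.
      replace a with (t + (a - t)) by ring.
      eapply Rle_lt_trans; [apply Rabs_triang|]. lra.
Qed.

Lemma SF_comb r A B c : SF r A -> SF r B -> SF r (fun l s t => A l s t + c * B l s t).
Proof.
  intros HA HB l s t Hs Ht.
  destruct (HA l s t Hs Ht) as [A0 [A1 Ac]].
  destruct (HB l s t Hs Ht) as [B0 [B1 Bc]].
  split; [|split].
  - apply (derivable_pt_lim_plus (fun y => A l y t) (fun y => c * B l y t)); auto.
    apply (derivable_pt_lim_scal (fun y => B l y t)); auto.
  - apply (derivable_pt_lim_plus (fun y => A l s y) (fun y => c * B l s y)); auto.
    apply (derivable_pt_lim_scal (fun y => B l s y)); auto.
  - intros eps Heps.
    destruct (Ac (eps/2) ltac:(lra)) as [d1 [Hd1 E1]].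
    destruct (Bc (eps/2/(Rabs c + 1))) as [d2 [Hd2 E2]].
    { apply Rdiv_lt_0_compat; pose proof (Rabs_pos c); lra. }
    exists (Rmin d1 d2). split; [apply Rmin_pos; auto|]. intros s' t' H1 H2.
    specialize (E1 s' t' ltac:(apply Rlt_le_trans with (1:=H1); apply Rmin_l) ltac:(apply Rlt_le_trans with (1:=H2); apply Rmin_l)).
    specialize (E2 s' t' ltac:(apply Rlt_le_trans with (1:=H1); apply Rmin_r) ltac:(apply Rlt_le_trans with (1:=H2); apply Rmin_r)).
    replace (A l s' t' + c * B l s' t' - (A l s t + c * B l s t)) with
      ((A l s' t' - A l s t) + c * (B l s' t' - B l s t)) by ring.
    eapply Rle_lt_trans; [apply Rabs_triang|]. rewrite Rabs_mult.
    assert (Rabs c * Rabs (B l s' t' - B l s t) <= (Rabs c + 1) * (eps / 2 / (Rabs c + 1))).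
    { apply Rmult_le_compat; try apply Rabs_pos; lra. }
    replace ((Rabs c + 1) * (eps / 2 / (Rabs c + 1))) with (eps/2) in H by (field; pose proof (Rabs_pos c); lra).
    lra.
Qed.
Theorem mainTheorem1
  (n k : nat) (hk : (1 <= k)%nat)
  (u : R -> R -> nat -> R) (J : (nat -> R) -> nat -> nat -> R)
  (r rho : R) (hr : 0 < r) (hrho : 0 < rho)
  (* u is smooth on the coordinate disc (cube) around z0 = 0 *)
  (Hu_smooth : forall i, (i < 2 * n)%nat -> smooth_on 2 (ball 2 r) (ucomp u i))
  (* u maps the disc into the coordinate chart of M *)
  (Hu_maps : forall s t, Rabs s < r -> Rabs t < r ->
     forall i, (i < 2 * n)%nat -> Rabs (u s t i) < rho)
  (* coordinates on M centred at p0 = u(z0) *)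
  (Hu0 : forall i, (i < 2 * n)%nat -> u 0 0 i = 0)
  (* J is a smooth almost complex structure on the chart of M *)
  (HJ_loc : forall v w, (forall i, (i < 2 * n)%nat -> v i = w i) ->
     forall i l, J v i l = J w i l)
  (HJ_smooth : forall i l, (i < 2 * n)%nat -> (l < 2 * n)%nat ->
     smooth_on (2 * n) (ball (2 * n) rho) (fun v => J v i l))
  (HJ_sq : forall v, ball (2 * n) rho v -> forall i l,
     (i < 2 * n)%nat -> (l < 2 * n)%nat ->
     rsum (2 * n) (fun p => J v i p * J v p l) = - deltaR i l)
  (* J at p0 is standard in the coordinates w_m = x_m + i y_m *)
  (HJ0 : forall i l, (i < 2 * n)%nat -> (l < 2 * n)%nat ->
     J zerov i l = J0 i l)
  (* u is (j,J)-holomorphic: du(j d/ds) = du(d/dt) = J(u) du(d/ds) *)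
  (Hhol : forall s t, Rabs s < r -> Rabs t < r ->
     forall us ut : nat -> R,
     (forall i, (i < 2 * n)%nat -> derivable_pt_lim (fun s' => u s' t i) s (us i)) ->
     (forall i, (i < 2 * n)%nat -> derivable_pt_lim (fun t' => u s t' i) t (ut i)) ->
     forall i, (i < 2 * n)%nat ->
       ut i = rsum (2 * n) (fun l => J (u s t) i l * us l))
  (* j^k u(z0) = 0: all partial derivatives of orders 1..k vanish at 0 *)
  (Hjet : forall i, (i < 2 * n)%nat -> forall D,
     is_partials 2 (ball 2 r) (ucomp u i) D ->
     forall l, (1 <= length l <= k)%nat -> Forall (fun q => (q < 2)%nat) l ->
     D l zerov = 0) :
  exists a : nat -> R,
    (* u(z) = a z^(k+1) + o(|z|^(k+1)), with a_m = a(2m) + i a(2m+1) *)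
    (forall eps, 0 < eps -> exists delta, 0 < delta /\
      forall s t, sqrt (s * s + t * t) < delta ->
      forall m, (m < n)%nat ->
        Rabs (u s t (2 * m)%nat
              - fst (cmul (a (2 * m)%nat, a (2 * m + 1)%nat) (cpow s t (k + 1))))
          <= eps * (sqrt (s * s + t * t)) ^ (k + 1) /\
        Rabs (u s t (2 * m + 1)%nat
              - snd (cmul (a (2 * m)%nat, a (2 * m + 1)%nat) (cpow s t (k + 1))))
          <= eps * (sqrt (s * s + t * t)) ^ (k + 1)) /\
    (* equivalently d^(k+1)u(z0) = (k+1)! a . dz^(k+1):
       d^(k+1)u(z0)(d/ds,...,d/dt,...) = (k+1)! a i^q, q = number of d/dt *)
    (forall m, (m < n)%nat -> forall Dx Dy,
      is_partials 2 (ball 2 r) (ucomp u (2 * m)) Dx ->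
      is_partials 2 (ball 2 r) (ucomp u (2 * m + 1)) Dy ->
      forall l, length l = (k + 1)%nat -> Forall (fun q => (q < 2)%nat) l ->
        Dx l zerov = INR (fact (k + 1))
          * fst (cmul (a (2 * m)%nat, a (2 * m + 1)%nat) (cpow 0 1 (count_t l))) /\
        Dy l zerov = INR (fact (k + 1))
          * snd (cmul (a (2 * m)%nat, a (2 * m + 1)%nat) (cpow 0 1 (count_t l)))) /\
    (* in particular the principal jet is holomorphic:
       d^(k+1)u(z0)(j v, ...) = J0 d^(k+1)u(z0)(v, ...) *)
    (forall m, (m < n)%nat -> forall Dx Dy,
      is_partials 2 (ball 2 r) (ucomp u (2 * m)) Dx ->
      is_partials 2 (ball 2 r) (ucomp u (2 * m + 1)) Dy ->
      forall l, length l = k -> Forall (fun q => (q < 2)%nat) l ->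
        Dx (1%nat :: l) zerov = - Dy (0%nat :: l) zerov /\
        Dy (1%nat :: l) zerov = Dx (0%nat :: l) zerov).
Proof.
  assert (HC : forall i, exists D, (i < 2*n)%nat -> is_partials 2 (ball 2 r) (ucomp u i) D).
  { intro i. destruct (lt_dec i (2*n)) as [Hi|Hi].
    - destruct (Hu_smooth i Hi) as [D HD]. exists D; auto.
    - exists (fun _ _ => 0). intro; lia. }
  set (Dfam := fun i => proj1_sig (constructive_indefinite_description _ (HC i))).
  assert (HDfam : forall i, (i < 2*n)%nat -> is_partials 2 (ball 2 r) (ucomp u i) (Dfam i)).
  { intros i Hi. exact (proj2_sig (constructive_indefinite_description _ (HC i)) Hi). }
  clearbody Dfam.
  set (G := fun i l s t => Dfam i l (pt s t)).
  assert (HG : forall i, (i < 2*n)%nat -> SF r (G i)) by (intros i Hi; apply (SF_of_partials r (ucomp u i)); auto).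
  assert (Hz : ball 2 r zerov) by (intros j _; unfold zerov; rewrite Rabs_R0; auto).
  assert (HGnil : forall i s t, (i < 2*n)%nat -> Rabs s < r -> Rabs t < r -> G i nil s t = u s t i).
  { intros i s t Hi Hs Ht. unfold G. destruct (HDfam i Hi) as [A _].
    rewrite A by (apply ball_pt; auto). reflexivity. }
  assert (HGjet : forall i l, (i < 2*n)%nat -> (length l <= k)%nat -> good l -> G i l 0 0 = 0).
  { intros i l Hi Hl Hg. unfold G. rewrite pt00. destruct l as [|c l'].
    - destruct (HDfam i Hi) as [A _]. rewrite A by auto. unfold ucomp, zerov. apply Hu0; auto.
    - apply (Hjet i Hi (Dfam i) (HDfam i Hi)); auto. simpl in *; lia. }
  assert (HT : forall i D, (i < 2*n)%nat -> is_partials 2 (ball 2 r) (ucomp u i) D ->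
     forall l, good l -> D l zerov = G i l 0 0).
  { intros i D Hi HD l Hg. unfold G. rewrite pt00.
    rewrite <- pt00. apply (fam_unique r (ucomp u i)); auto; rewrite Rabs_R0; auto. }
  assert (HH : forall i s t, (i < 2*n)%nat -> Rabs s < r -> Rabs t < r ->
     G i [1%nat] s t = rsum (2*n) (fun l => J (u s t) i l * G l [0%nat] s t)).
  { intros i s t Hi Hs Ht.
    apply (Hhol s t Hs Ht (fun l => G l [0%nat] s t) (fun l => G l [1%nat] s t)); auto.
    - intros j Hj. destruct (HG j Hj nil s t Hs Ht) as [D0 _].
      apply (dpl_local (fun y => G j nil y t) _ s _ (r - Rabs s)); [lra| |exact D0].
      intros y Hy. apply HGnil; auto. replace y with (s + (y - s)) by ring.
      eapply Rle_lt_trans; [apply Rabs_triang|]. lra.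
    - intros j Hj. destruct (HG j Hj nil s t Hs Ht) as [_ [D1 _]].
      apply (dpl_local (fun y => G j nil s y) _ t _ (r - Rabs t)); [lra| |exact D1].
      intros y Hy. apply HGnil; auto. replace y with (t + (y - t)) by ring.
      eapply Rle_lt_trans; [apply Rabs_triang|]. lra. }
  assert (HJc : forall i l, (i < 2*n)%nat -> (l < 2*n)%nat ->
     small 0 (fun s t => J (u s t) i l - J0 i l)).
  { intros i l Hi Hl eps Heps.
    destruct (HJ_smooth i l Hi Hl) as [DJ [DJ0 [_ DJc]]].
    assert (Hz2 : ball (2*n) rho zerov) by (intros j _; unfold zerov; rewrite Rabs_R0; auto).
    destruct (DJc nil zerov Hz2 eps Heps) as [dJ [HdJ EJ]].
    set (dJ' := Rmin dJ rho).
    assert (HdJ' : 0 < dJ') by (apply Rmin_pos; auto).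
    destruct (fin_min (2*n) (fun j d => d <= r /\ forall s t, Rabs s < d -> Rabs t < d -> Rabs (u s t j) < dJ'))
      as [d [Hd Ed]].
    { intros j d d' [Hd' Hdd] [Hr' P]. split; [lra|]. intros s t Hs Ht. apply P; lra. }
    { intros j Hj. destruct (HG j Hj nil 0 0 ltac:(rewrite Rabs_R0; auto) ltac:(rewrite Rabs_R0; auto))
        as [_ [_ Cj]].
      destruct (Cj dJ' HdJ') as [dj [Hdj Ej]].
      exists (Rmin dj r). split; [apply Rmin_pos; auto|]. split; [apply Rmin_r|].
      intros s t Hs Ht.
      assert (Rabs s < r) by (apply Rlt_le_trans with (1:=Hs); apply Rmin_r).
      assert (Rabs t < r) by (apply Rlt_le_trans with (1:=Ht); apply Rmin_r).
      rewrite <- (HGnil j s t Hj) by auto.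
      replace (G j [] s t) with (G j [] s t - G j [] 0 0).
      2:{ rewrite (HGjet j nil Hj ltac:(simpl; lia) ltac:(constructor)). ring. }
      apply Ej; rewrite Rminus_0_r; apply Rlt_le_trans with (Rmin dj r); auto; apply Rmin_l. }
    exists d. split; auto. intros s t Hs Ht. simpl. rewrite Rmult_1_r.
    assert (Hu : forall j, (j < 2*n)%nat -> Rabs (u s t j) < dJ') by (intros j Hj; apply (proj2 (Ed j Hj)); auto).
    assert (Hb : ball (2*n) rho (u s t)).
    { intros j Hj. apply Rlt_le_trans with dJ'; auto. apply Rmin_r. }
    rewrite <- (DJ0 (u s t) Hb), <- (HJ0 i l Hi Hl), <- (DJ0 zerov Hz2).
    left. apply EJ. intros j Hj. unfold zerov. rewrite Rminus_0_r.
    apply Rlt_le_trans with dJ'; auto. apply Rmin_l. }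
  assert (HGb : forall j, (j < 2*n)%nat -> big k (G j [0%nat])).
  { intros j Hj.
    destruct (expand k r (fun l => G j (l ++ [0%nat])) hr (SF_shift r (G j) 0 (HG j Hj))) with (eps := 1)
      as [d [Hd [_ Ed]]].
    { intros l Hl Hg. apply HGjet; auto. rewrite length_app; simpl; lia. apply good_app; auto. }
    { lra. }
    set (F := INR (fact k)).
    assert (HF : 0 < F) by (apply lt_0_INR, lt_O_fact).
    exists (lsum k (fun l => Rabs (G j (l ++ [0%nat]) 0 0)) / F + 1), d. split; auto.
    intros s t Hs Ht. specialize (Ed s t Hs Ht). simpl in Ed. fold F in Ed.
    set (S := (Rabs s + Rabs t) ^ k) in *.
    assert (HS : 0 <= S) by (unfold S; apply pow_le; pose proof (Rabs_pos s); pose proof (Rabs_pos t); lra).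
    set (P := lsum k (fun l => G j (l ++ [0%nat]) 0 0 * mono l s t)) in *.
    assert (HP : Rabs P <= lsum k (fun l => Rabs (G j (l ++ [0%nat]) 0 0)) * S).
    { unfold P. eapply Rle_trans; [apply lsum_abs|]. rewrite <- lsum_scal_r.
      apply lsum_le. intros l Hl Hg. rewrite Rabs_mult. apply Rmult_le_compat_l; [apply Rabs_pos|].
      unfold S; rewrite <- Hl; apply mono_bound. }
    replace (G j [0%nat] s t) with ((G j [0%nat] s t - P / F) + P / F) by ring.
    eapply Rle_trans; [apply Rabs_triang|].
    unfold Rdiv at 2. rewrite Rabs_mult, (Rabs_right (/ F)) by (left; apply Rinv_0_lt_compat; auto).
    assert (Rabs P * / F <= lsum k (fun l => Rabs (G j (l ++ [0%nat]) 0 0)) * S / F).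
    { unfold Rdiv. apply Rmult_le_compat_r; auto. left; apply Rinv_0_lt_compat; auto. }
    replace ((lsum k (fun l => Rabs (G j (l ++ [0%nat]) 0 0)) / F + 1) * S) with
      (lsum k (fun l => Rabs (G j (l ++ [0%nat]) 0 0)) * S / F + S) by (field; lra).
    lra. }
  assert (HE : forall i, (i < 2*n)%nat ->
     small k (fun s t => rsum (2*n) (fun l => (J (u s t) i l - J0 i l) * G l [0%nat] s t))).
  { intros i Hi. apply small_rsum. intros l Hl.
    apply (small_mul k (fun s t => J (u s t) i l - J0 i l) (G l [0%nat])); auto. }
  assert (HCR : forall m, (m < n)%nat -> forall l, length l = k -> good l ->
     G (2*m)%nat (l ++ [1%nat]) 0 0 = - G (2*m+1)%nat (l ++ [0%nat]) 0 0 /\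
     G (2*m+1)%nat (l ++ [1%nat]) 0 0 = G (2*m)%nat (l ++ [0%nat]) 0 0).
  { intros m Hm l Hl Hg.
    assert (Hx : (2*m < 2*n)%nat) by lia.
    assert (Hy : (2*m+1 < 2*n)%nat) by lia.
    split.
    - pose proof (vanish r (fun l s t => G (2*m)%nat (l ++ [1%nat]) s t + 1 * G (2*m+1)%nat (l ++ [0%nat]) s t) k hr) as V.
      assert (V0 : (fun l s t => G (2*m)%nat (l ++ [1%nat]) s t + 1 * G (2*m+1)%nat (l ++ [0%nat]) s t) l 0 0 = 0).
      2:{ cbv beta in V0. lra. }
      apply V; auto.
      + apply SF_comb; apply SF_shift; auto.
      + intros l' Hl' Hg'. cbv beta. rewrite !HGjet; auto; try ring;
          try (apply good_app; auto); rewrite length_app; simpl; lia.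
      + apply (small_ext r k (fun s t => rsum (2*n) (fun l => (J (u s t) (2*m)%nat l - J0 (2*m)%nat l) * G l [0%nat] s t))); auto.
        intros s t Hs Ht. cbv beta. simpl app.
        rewrite (HH (2*m)%nat s t Hx Hs Ht).
        rewrite (rsum_ext (2*n) _ (fun l => J (u s t) (2*m)%nat l * G l [0%nat] s t - (if Nat.eqb l (2*m+1) then -1 else 0) * G l [0%nat] s t))
          by (intros q _; rewrite J0_even; ring).
        rewrite rsum_minus, rsum_delta by auto. ring.
    - pose proof (vanish r (fun l s t => G (2*m+1)%nat (l ++ [1%nat]) s t + (-1) * G (2*m)%nat (l ++ [0%nat]) s t) k hr) as V.
      assert (V0 : (fun l s t => G (2*m+1)%nat (l ++ [1%nat]) s t + (-1) * G (2*m)%nat (l ++ [0%nat]) s t) l 0 0 = 0).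
      2:{ cbv beta in V0. lra. }
      apply V; auto.
      + apply SF_comb; apply SF_shift; auto.
      + intros l' Hl' Hg'. cbv beta. rewrite !HGjet; auto; try ring;
          try (apply good_app; auto); rewrite length_app; simpl; lia.
      + apply (small_ext r k (fun s t => rsum (2*n) (fun l => (J (u s t) (2*m+1)%nat l - J0 (2*m+1)%nat l) * G l [0%nat] s t))); auto.
        intros s t Hs Ht. cbv beta. simpl app.
        rewrite (HH (2*m+1)%nat s t Hy Hs Ht).
        rewrite (rsum_ext (2*n) _ (fun l => J (u s t) (2*m+1)%nat l * G l [0%nat] s t - (if Nat.eqb l (2*m) then 1 else 0) * G l [0%nat] s t))
          by (intros q _; rewrite J0_odd; ring).
        rewrite rsum_minus, rsum_delta by auto. ring. }
  set (F := INR (fact (k+1))).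
  assert (HF : 0 < F) by (apply lt_0_INR, lt_O_fact).
  assert (Hsym : forall i l, (i < 2*n)%nat -> good l ->
     G i l 0 0 = G i (canon (length l) (count_t l)) 0 0).
  { intros i l Hi Hg. apply (sym r (G i) l (HG i Hi) Hg); rewrite Rabs_R0; auto. }
  set (Xv := fun m q => G (2*m)%nat (canon (k+1) q) 0 0).
  set (Yv := fun m q => G (2*m+1)%nat (canon (k+1) q) 0 0).
  assert (HXY : forall m q, (m < n)%nat -> (q <= k)%nat ->
     Xv m (S q) = - Yv m q /\ Yv m (S q) = Xv m q).
  { intros m q Hm Hq.
    destruct (HCR m Hm (canon k q) (canon_length k q Hq) (canon_good k q)) as [C1 C2].
    assert (L1 : length (canon k q ++ [1%nat]) = (k+1)%nat) by (rewrite length_app, canon_length; simpl; lia).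
    assert (L0 : length (canon k q ++ [0%nat]) = (k+1)%nat) by (rewrite length_app, canon_length; simpl; lia).
    assert (G1 : good (canon k q ++ [1%nat])) by (apply good_app; [apply canon_good| lia]).
    assert (G0 : good (canon k q ++ [0%nat])) by (apply good_app; [apply canon_good| lia]).
    rewrite (Hsym (2*m)%nat _ ltac:(lia) G1), (Hsym (2*m+1)%nat _ ltac:(lia) G0) in C1.
    rewrite (Hsym (2*m+1)%nat _ ltac:(lia) G1), (Hsym (2*m)%nat _ ltac:(lia) G0) in C2.
    rewrite L1, L0, count_app1, count_app0, canon_count in C1, C2.
    unfold Xv, Yv. split; auto. }
  assert (Hpow : forall m q, (m < n)%nat -> (q <= k+1)%nat ->
     (Xv m q, Yv m q) = cmul (Xv m 0%nat, Yv m 0%nat) (cpow 0 1 q)).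
  { intros m q Hm. induction q as [|q IH]; intros Hq.
    - simpl. unfold cmul; simpl. f_equal; ring.
    - simpl cpow. rewrite cmul_assoc, <- IH by lia.
      destruct (HXY m q Hm ltac:(lia)) as [E1 E2]. rewrite E1, E2.
      unfold cmul; simpl. f_equal; ring. }
  set (a := fun j => G j (canon (k+1) 0) 0 0 / F).
  assert (Hval : forall m l, (m < n)%nat -> good l -> length l = (k+1)%nat ->
     G (2*m)%nat l 0 0 = F * fst (cmul (a (2*m)%nat, a (2*m+1)%nat) (cpow 0 1 (count_t l))) /\
     G (2*m+1)%nat l 0 0 = F * snd (cmul (a (2*m)%nat, a (2*m+1)%nat) (cpow 0 1 (count_t l)))).
  { intros m l Hm Hg Hl.
    rewrite (Hsym (2*m)%nat l ltac:(lia) Hg), (Hsym (2*m+1)%nat l ltac:(lia) Hg), Hl.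
    pose proof (count_le l Hg) as Hc.
    pose proof (Hpow m (count_t l) Hm ltac:(lia)) as E.
    change (G (2*m)%nat (canon (k+1) (count_t l)) 0 0) with (Xv m (count_t l)).
    change (G (2*m+1)%nat (canon (k+1) (count_t l)) 0 0) with (Yv m (count_t l)).
    pose proof (f_equal fst E) as EX. pose proof (f_equal snd E) as EY.
    simpl fst in EX. simpl snd in EY. rewrite EX, EY.
    unfold a, Xv, Yv, cmul. simpl. split; field; lra. }
  exists a. split; [|split].
  3:{ intros m Hm Dx Dy HDx HDy l Hl Hg.
    rewrite (HT (2*m)%nat Dx ltac:(lia) HDx), (HT (2*m+1)%nat Dy ltac:(lia) HDy),
      (HT (2*m)%nat Dx ltac:(lia) HDx), (HT (2*m+1)%nat Dy ltac:(lia) HDy);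
      try (constructor; auto; lia).
    destruct (HCR m Hm l Hl Hg) as [C1 C2].
    assert (Q : forall i c, (i < 2*n)%nat -> (c < 2)%nat -> G i (c :: l) 0 0 = G i (l ++ [c]) 0 0).
    { intros i c Hi Hc. apply (sym2 r (G i)); auto; try (rewrite Rabs_R0; auto).
      constructor; auto. apply good_app; auto. rewrite length_app; simpl; lia.
      destruct c as [|[|c]]; try lia.
      rewrite count_t_0, count_app0; auto. rewrite count_t_1, count_app1; auto. }
    rewrite !Q by lia. split; auto. }
  2:{ intros m Hm Dx Dy HDx HDy l Hl Hg.
    rewrite (HT (2*m)%nat Dx ltac:(lia) HDx), (HT (2*m+1)%nat Dy ltac:(lia) HDy) by auto.
    apply Hval; auto. }
  intros eps Heps.
  set (e' := eps / 2 ^ (k+1)).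
  assert (H2 : 0 < 2 ^ (k+1)) by (apply pow_lt; lra).
  assert (He' : 0 < e') by (unfold e'; apply Rdiv_lt_0_compat; auto).
  assert (Hpoly : forall m s t, (m < n)%nat ->
     lsum (k+1) (fun l => G (2*m)%nat l 0 0 * mono l s t) / F = fst (cmul (a (2*m)%nat, a (2*m+1)%nat) (cpow s t (k+1))) /\
     lsum (k+1) (fun l => G (2*m+1)%nat l 0 0 * mono l s t) / F = snd (cmul (a (2*m)%nat, a (2*m+1)%nat) (cpow s t (k+1)))).
  { intros m s t Hm. destruct (LC (k+1) s t) as [L1 L2]. split.
    - rewrite (lsum_ext_good (k+1) _ (fun l => F * (a (2*m)%nat * (fst (cpow 0 1 (count_t l)) * mono l s t)
          + (- a (2*m+1)%nat) * (snd (cpow 0 1 (count_t l)) * mono l s t)))).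
      + rewrite lsum_scal, lsum_plus, !lsum_scal, L1, L2. unfold cmul; simpl. field; lra.
      + intros l Hl Hg. rewrite (proj1 (Hval m l Hm Hg Hl)). unfold cmul; simpl. ring.
    - rewrite (lsum_ext_good (k+1) _ (fun l => F * (a (2*m)%nat * (snd (cpow 0 1 (count_t l)) * mono l s t)
          + a (2*m+1)%nat * (fst (cpow 0 1 (count_t l)) * mono l s t)))).
      + rewrite lsum_scal, lsum_plus, !lsum_scal, L1, L2. unfold cmul; simpl. field; lra.
      + intros l Hl Hg. rewrite (proj2 (Hval m l Hm Hg Hl)). unfold cmul; simpl. ring. }
  destruct (fin_min n (fun m d => d <= r /\ forall s t, Rabs s < d -> Rabs t < d ->
       Rabs (G (2*m)%nat nil s t - lsum (k+1) (fun l => G (2*m)%nat l 0 0 * mono l s t) / F) <= e' * (Rabs s + Rabs t) ^ (k+1) /\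
       Rabs (G (2*m+1)%nat nil s t - lsum (k+1) (fun l => G (2*m+1)%nat l 0 0 * mono l s t) / F) <= e' * (Rabs s + Rabs t) ^ (k+1)))
    as [d [Hd Ed]].
  { intros j d d' [Hd' Hdd] [Hr' P]. split; [lra|]. intros s t Hs Ht. apply P; lra. }
  { intros m Hm.
    destruct (expand (k+1) r (G (2*m)%nat) hr (HG (2*m)%nat ltac:(lia))) with (eps := e') as [d1 [Hd1 [Hd1r E1]]]; auto.
    { intros l Hl Hg. apply HGjet; auto; lia. }
    destruct (expand (k+1) r (G (2*m+1)%nat) hr (HG (2*m+1)%nat ltac:(lia))) with (eps := e') as [d2 [Hd2 [Hd2r E2]]]; auto.
    { intros l Hl Hg. apply HGjet; auto; lia. }
    exists (Rmin d1 d2). split; [apply Rmin_pos; auto|]. split.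
    { eapply Rle_trans; [apply Rmin_l| auto]. }
    intros s t Hs Ht. split.
    - apply E1; (apply Rlt_le_trans with (Rmin d1 d2); [auto| apply Rmin_l]).
    - apply E2; (apply Rlt_le_trans with (Rmin d1 d2); [auto| apply Rmin_r]). }
  exists d. split; auto. intros s t Hst m Hm.
  set (rh := sqrt (s * s + t * t)) in *.
  assert (Hsr : Rabs s <= rh).
  { unfold rh. rewrite <- sqrt_Rsqr_abs. apply sqrt_le_1_alt. unfold Rsqr. nra. }
  assert (Htr : Rabs t <= rh).
  { unfold rh. rewrite <- sqrt_Rsqr_abs. apply sqrt_le_1_alt. unfold Rsqr. nra. }
  destruct (Ed m Hm) as [Hdr P]. specialize (P s t ltac:(lra) ltac:(lra)).
  destruct P as [P1 P2]. destruct (Hpoly m s t Hm) as [Q1 Q2].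
  rewrite Q1 in P1. rewrite Q2 in P2.
  rewrite HGnil in P1, P2 by (lia || lra).
  assert (B : e' * (Rabs s + Rabs t) ^ (k+1) <= eps * rh ^ (k+1)).
  { apply Rle_trans with (e' * (2 * rh) ^ (k+1)).
    - apply Rmult_le_compat_l; [lra|]. apply pow_incr.
      pose proof (Rabs_pos s); pose proof (Rabs_pos t). lra.
    - rewrite Rpow_mult_distr. unfold e'. right. field. lra. }
  split; lra.
Qed.
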